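(* Let $n,x$ be positive integers with $x\le n$ and let $M_1,\dots,M_s$ be perfect matchings of $K_{2n}$. Let $M$ be a perfect matching of $K_{2n}$ chosen uniformly at random. For $i\in\{1,\dots,s\}$ and an $x$-matching $X\subseteq M_i$, let $A_{i,X}$ be the event $X\subseteq M$. Fix such a pair $(i,X)$, and let $\mathcal S$ be any set of pairs $(i',X')$ with $i'\in\{1,\dots,s\}$ and $X'\subseteq M_{i'}$ an $x$-matching whose vertex set is disjoint from the vertex set of $X$. Let $E=\bigcap_{(i',X')\in\mathcal S}\overline{A_{i',X'}}$ and suppose $\mathbb P(E)>0$. Then $$\mathbb P(A_{i,X}\mid E)\le\frac{1}{N},\qquad\text{where } N=\sum_{j=\max(0,\,2x-n)}^{x}\binom{2x}{2j}\frac{(2j)!}{j!\,2^j}.$$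
   Context: An $x$-matching of $K_{2n}$ is a matching (set of pairwise vertex-disjoint edges) of size exactly $x$. The empty intersection (when $\mathcal S=\emptyset$) is the whole probability space. *)

(* Defs.v *)
From HB Require Import structures.
From mathcomp Require Import all_boot all_order all_algebra.
Set Implicit Arguments. Unset Strict Implicit. Unset Printing Implicit Defensive.
Import Order.TTheory GRing.Theory Num.Theory.

(* Vertex set of K_{2n}: 'I_(n.*2).  An edge of K_{2n} is a 2-element subset
   of the vertices; a set of edges is a {set {set V}}. *)

Definition is_matching (V : finType) (M : {set {set V}}) : bool :=
  [forall e in M, #|e| == 2] &&
  [forall e in M, forall f in M, (e != f) ==> [disjoint e & f]].

Definition x_matching (V : finType) (x : nat) (M : {set {set V}}) : bool :=
  is_matching M && (#|M| == x).

Definition perfect_matching (V : finType) (M : {set {set V}}) : bool :=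
  is_matching M && (cover M == [set: V]).

Definition pm_space (n : nat) : {set {set {set 'I_(n.*2)}}} :=
  [set M | perfect_matching M].

Definition prob (n : nat) (P : pred {set {set 'I_(n.*2)}}) : rat :=
  (#|[set M in pm_space n | P M]|%:R / #|pm_space n|%:R)%R.

Definition cond_prob (n : nat) (A E : pred {set {set 'I_(n.*2)}}) : rat :=
  (prob (fun M => A M && E M) / prob E)%R.

Definition ev_contains (n : nat) (X : {set {set 'I_(n.*2)}}) :
  pred {set {set 'I_(n.*2)}} := fun M => X \subset M.

Definition ev_avoid (n s : nat) (S : {set ('I_s * {set {set 'I_(n.*2)}})}) :
  pred {set {set 'I_(n.*2)}} := fun M => [forall p in S, ~~ (p.2 \subset M)].

Definition bigN (n x : nat) : rat :=
  (\sum_((x.*2 - n)%N <= j < x.+1)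
     'C(x.*2, j.*2)%:R * ((j.*2)`!%:R / (j`! * 2 ^ j)%:R))%R.

(* Main.v *)
Require Import Defs.
From HB Require Import structures.
From mathcomp Require Import all_boot all_order all_algebra.
Import Order.TTheory GRing.Theory Num.Theory.
From Stdlib Require Import ArithRing Lia.
Set Implicit Arguments. Unset Strict Implicit. Unset Printing Implicit Defensive.

Section Gen.
Variable V : finType.
Implicit Types (Y K Q M X : {set {set V}}) (U R e f : {set V}).

Lemma disjointP (A B : {set V}) :
  reflect (forall v, v \in A -> v \in B -> False) [disjoint A & B].
Proof.
rewrite -setI_eq0; apply: (iffP eqP) => [H v vA vB|H].
  have : v \in A :&: B by rewrite inE vA vB.
  by rewrite H inE.
apply/setP => v; rewrite !inE; apply/negP => /andP [] /H; auto.
Qed.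

Lemma matP Y : reflect ((forall e, e \in Y -> #|e| = 2) /\
   (forall e f, e \in Y -> f \in Y -> e != f -> [disjoint e & f])) (is_matching Y).
Proof.
apply: (iffP andP) => [[/forallP H1 /forallP H2]|[H1 H2]]; split.
- by move=> e eY; have /implyP/(_ eY)/eqP := H1 e.
- move=> e f eY fY nef; have /implyP/(_ eY)/forallP/(_ f)/implyP/(_ fY)/implyP := H2 e.
  by apply.
- by apply/forallP => e; apply/implyP => eY; rewrite H1.
- apply/forallP => e; apply/implyP => eY; apply/forallP => f; apply/implyP => fY.
  by apply/implyP; apply: H2.
Qed.

Lemma card_cover_mat Y : is_matching Y -> #|cover Y| = #|Y|.*2.
Proof.
case/matP => H1 H2.
have : trivIset Y by apply/trivIsetP => e f eY fY; apply: H2.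
rewrite /trivIset => /eqP <-.
rewrite (eq_bigr (fun _ => 2)) ?sum_nat_const ?muln2 // => e /H1.

Qed.


Definition mat_in U j : {set {set {set V}}} :=
  [set Y : {set {set V}} | [&& is_matching Y, [forall e in Y, e \subset U] & #|Y| == j]].
Definition E2 U : {set {set V}} := [set e : {set V} | e \subset U & #|e| == 2].

Lemma mat_inP U j Y : reflect [/\ is_matching Y, (forall e, e \in Y -> e \subset U) & #|Y| = j]
  (Y \in mat_in U j).
Proof.
rewrite inE; apply: (iffP and3P) => [[H1 /forallP H2 /eqP H3]|[H1 H2 H3]]; split => //.
- by move=> e eY; have /implyP := H2 e; apply.
- by apply/forallP => e; apply/implyP; apply: H2.
- by apply/eqP.
Qed.

Lemma sum_mem_card (A Y : {set {set V}}) : Y \subset A ->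
  \sum_(e in A) (e \in Y) = #|Y|.
Proof.
move=> YA.
rewrite (eq_bigr (fun e => if e \in Y then 1 else 0)); last by move=> e _; case: (e \in Y).
rewrite -big_mkcondr /= -sum1_card; apply: eq_bigl => e.
by case eY: (e \in Y); rewrite ?andbT ?andbF // (subsetP YA).
Qed.

Lemma sum_pred_card (T : finType) (A : {set T}) (P : pred T) :
  \sum_(y in A) (P y : nat) = #|[set y in A | P y]|.
Proof.
rewrite (eq_bigr (fun y => if P y then 1 else 0)); last by move=> y _; case: (P y).
rewrite -big_mkcondr /= -sum1_card; apply: eq_bigl => y; by rewrite !inE.
Qed.

Lemma mat_fiber U j e : e \in E2 U ->
  [set Y in mat_in U j.+1 | e \in Y] = [set e |: Y' | Y' in mat_in (U :\: e) j].
Proof.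
rewrite inE => /andP [eU /eqP e2].
apply/setP => Y; rewrite inE; apply/andP/imsetP.
- case=> /mat_inP [/matP [H1 H2] H3 H4] eY.
  exists (Y :\ e); last by rewrite setD1K.
  apply/mat_inP; split.
  + apply/matP; split => [f /setD1P [_ fY]|f g /setD1P[_ fY] /setD1P[_ gY]]; [exact: H1|exact: H2].
  + move=> f /setD1P [fe fY]; rewrite subsetD H3 //=.
    by apply: H2 => //; rewrite eq_sym.
  + by move: H4; rewrite (cardsD1 e) eY add1n => -[].
- case=> Y' /mat_inP [/matP [H1 H2] H3 H4] ->; split; last by rewrite setU11.
  have eY' : e \notin Y'.
    apply/negP => /H3; rewrite subsetD -setI_eq0 setIid => /andP [_ /eqP e0].
    by move: e2; rewrite e0 cards0.
  apply/mat_inP; split.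
  + apply/matP; split => [f /setU1P [->|/H1] //|f g /setU1P [->|fY] /setU1P [->|gY]].
    * by rewrite eqxx.
    * by move=> _; have := H3 _ gY; rewrite subsetD disjoint_sym => /andP[].
    * by move=> _; have := H3 _ fY; rewrite subsetD => /andP[].
    * exact: H2.
  + move=> f /setU1P [->//|/H3]; rewrite subsetD => /andP[] //.
  + by rewrite cardsU1 eY' H4.
Qed.

Lemma count_step U j : j.+1 * #|mat_in U j.+1| = \sum_(e in E2 U) #|mat_in (U :\: e) j|.
Proof.
have E1 : j.+1 * #|mat_in U j.+1| = \sum_(Y in mat_in U j.+1) \sum_(e in E2 U) (e \in Y).
  rewrite mulnC -sum_nat_const; apply: eq_bigr => Y /mat_inP [/matP [H1 _] H3 H4].
  rewrite sum_mem_card ?H4 //; apply/subsetP => e eY; rewrite inE H3 //= H1 //.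
rewrite E1 exchange_big /=; apply: eq_bigr => e eE.
rewrite sum_pred_card (mat_fiber j eE) card_in_imset //.
  move=> Y1 Y2 /mat_inP [_ H1 _] /mat_inP [_ H2 _] Heq.
  have nin : forall Y', (forall f, f \in Y' -> f \subset U :\: e) -> e \notin Y'.
    move=> Y' H; apply/negP => /H; rewrite subsetD -setI_eq0 setIid => /andP [_ /eqP e0].
    by move: eE; rewrite inE e0 cards0 andbF.
  by rewrite -(setU1K (nin _ H1)) -(setU1K (nin _ H2)) Heq.
Qed.



Lemma count_mat U j : j`! * 2 ^ j * #|mat_in U j| = #|U| ^_ (j.*2).
Proof.
elim: j U => [|j IH] U.
  rewrite ffactn0 fact0 expn0 !mul1n.
  suff -> : mat_in U 0 = [set set0] by rewrite cards1.
  apply/setP => Y; rewrite in_set1; apply/mat_inP/eqP => [[_ _ /eqP]|->].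
    by rewrite cards_eq0 => /eqP.
  split; last by rewrite cards0.
  - by apply/matP; split => [e|e f]; rewrite inE.
  - by move=> e; rewrite inE.
rewrite factS expnS.
have -> : j.+1 * j`! * (2 * 2 ^ j) * #|mat_in U j.+1| =
   2 * (j`! * 2 ^ j * (j.+1 * #|mat_in U j.+1|)) by rewrite -!multE; ring.
rewrite count_step big_distrr /=.
rewrite (eq_bigr (fun _ => (#|U| - 2) ^_ (j.*2))); last first.
  move=> e; rewrite inE => /andP [eU /eqP e2].
  by rewrite IH cardsD (setIidPr eU) e2.
have h2 : 'C(#|U|, 2) * 2 = #|U| ^_ 2 by rewrite -bin_ffact.
rewrite sum_nat_const cards_draws mulnA (mulnC 2) h2.
have h3 : #|U| ^_ 2 = #|U| * #|U|.-1 by rewrite ffactnS ffactn1.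
by rewrite doubleS [RHS]ffactnS [in RHS]ffactnS h3 subn2 mulnA.
Qed.


Lemma cover_setU1 e Y : cover (e |: Y) = e :|: cover Y.
Proof.
apply/setP => v; rewrite inE; apply/bigcupP/orP => [[f /setU1P [->|fY] vf]|[ve|/bigcupP [f fY vf]]].
- by left.
- by right; apply/bigcupP; exists f.
- by exists e; rewrite ?setU11.
- by exists f; rewrite // setU1r.
Qed.

Lemma exists_pm k R : #|R| = k.*2 -> exists Q, is_matching Q /\ cover Q = R.
Proof.
elim: k R => [|k IH] R hR.
  exists set0; split; first by apply/matP; split => [e|e f]; rewrite inE.
  apply/setP => v; rewrite /cover big_set0 inE.
  by move: hR => /eqP; rewrite cards_eq0 => /eqP ->; rewrite inE.
have : 0 < #|R| by rewrite hR doubleS.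
rewrite card_gt0 => /set0Pn [a aR].
have : 0 < #|R :\ a|.
  by move: hR; rewrite (cardsD1 a R) aR doubleS add1n => -[->].
rewrite card_gt0 => /set0Pn [b /setD1P [ba bR]].
have abR : [set a; b] \subset R by apply/subsetP => v; rewrite !inE => /orP [] /eqP ->.
have : #|R :\: [set a; b]| = k.*2.
  by rewrite cardsD (setIidPr abR) cards2 eq_sym ba hR doubleS subSS subn1.
case/IH => Q' [/matP [H1 H2] H3].
exists ([set a; b] |: Q'); split.
  apply/matP; split => [f /setU1P [->|/H1] //|f g /setU1P [->|fQ] /setU1P [->|gQ]].
  - by rewrite cards2 eq_sym ba.
  - by rewrite eqxx.
  - move=> _; apply/disjointP => v vab vg.
    have : v \in cover Q' by apply/bigcupP; exists g.
    by rewrite H3 inE vab.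
  - move=> _; apply/disjointP => v vf vab.
    have : v \in cover Q' by apply/bigcupP; exists f.
    by rewrite H3 inE vab.
  - exact: H2.
by rewrite cover_setU1 H3 -{1}(setIidPr abR) setID.
Qed.


Definition Gprop Q K (g : {ffun V -> V}) :=
  [forall q in Q, (g @: q) \in K] &&
  [forall q in Q, forall q' in Q, (q != q') ==> (g @: q != g @: q')].

Lemma GpropP Q K (g : {ffun V -> V}) : reflect ((forall q, q \in Q -> g @: q \in K) /\
   (forall q q', q \in Q -> q' \in Q -> q != q' -> g @: q != g @: q')) (Gprop Q K g).
Proof.
apply: (iffP andP) => [[/forallP H1 /forallP H2]|[H1 H2]]; split.
- by move=> q qQ; have /implyP := H1 q; apply.
- move=> q q' qQ q'Q; have /implyP/(_ qQ)/forallP/(_ q')/implyP/(_ q'Q)/implyP := H2 q.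
  by apply.
- by apply/forallP => q; apply/implyP => /H1.
- apply/forallP => q; apply/implyP => qQ; apply/forallP => q'; apply/implyP => q'Q.
  by apply/implyP; apply: H2.
Qed.

Lemma exists_g k Q K : is_matching Q -> is_matching K -> #|Q| = k -> k <= #|K| ->
  exists g, Gprop Q K g.
Proof.
move=> mQ mK; elim: k Q mQ => [|k IH] Q mQ hQ hK.
  exists [ffun v => v]; apply/GpropP; move: hQ => /eqP; rewrite cards_eq0 => /eqP ->.
  by split => [q|q q']; rewrite inE.
have : 0 < #|Q| by rewrite hQ.
rewrite card_gt0 => /set0Pn [q0 q0Q].
have hQ' : #|Q :\ q0| = k by move: hQ; rewrite (cardsD1 q0 Q) q0Q add1n => -[].
have mQ' : is_matching (Q :\ q0).
  move: mQ => /matP [H1 H2]; apply/matP; split => [f /setD1P [_ /H1]//|f g /setD1P [_ fQ] /setD1P [_ gQ]].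
  exact: H2.
have [g' /GpropP [G1 G2]] := IH _ mQ' hQ' (ltnW hK).
set D' := [set g' @: q | q : {set V} in Q :\ q0].
have : ~~ (K \subset D').
  apply/negP => /subset_leq_card; rewrite leqNgt; apply/negP/negPn.
  by apply: leq_ltn_trans (leq_imset_card _ _) _; rewrite hQ'.
case/subsetPn => d dK dD'.
move: mQ => /matP [H1 H2]; move: mK => /matP [K1 K2].
have /eqP/cards2P [a [b [ab q0ab]]] := H1 _ q0Q.
have /eqP/cards2P [c [c' [cc' dcc]]] := K1 _ dK.
exists [ffun v => if v == a then c else if v == b then c' else g' v].
have gq0 : [ffun v => if v == a then c else if v == b then c' else g' v] @: q0 = d.
  by rewrite q0ab imsetU1 imset_set1 !ffunE eqxx eq_sym (negbTE ab) eqxx dcc.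
have gq : forall q, q \in Q :\ q0 ->
  [ffun v => if v == a then c else if v == b then c' else g' v] @: q = g' @: q.
  move=> q /setD1P [qq0 qQ]; apply: eq_in_imset => v vq; rewrite ffunE.
  have /disjointP dj := H2 _ _ qQ q0Q qq0.
  case: eqP => [va|_]; first by case: (dj v) => //; rewrite q0ab va !inE eqxx.
  case: eqP => [vb|_] //; by case: (dj v) => //; rewrite q0ab vb !inE eqxx orbT.
apply/GpropP; split.
  move=> q qQ; case: (q =P q0) => [->|/eqP qq0]; first by rewrite gq0.
  have qQ' : q \in Q :\ q0 by apply/setD1P.
  by rewrite gq // G1.
move=> q q' qQ q'Q qq'.
case: (q =P q0) => [e1|/eqP n1]; case: (q' =P q0) => [e2|/eqP n2].
- by move: qq'; rewrite e1 e2 eqxx.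
- have q'Q' : q' \in Q :\ q0 by apply/setD1P.
  rewrite e1 gq0 gq //; apply/eqP => ed; move: dD'; rewrite ed.
  by rewrite imset_f.
- have qQ' : q \in Q :\ q0 by apply/setD1P.
  rewrite e2 gq0 gq //; apply/eqP => ed; move: dD'; rewrite -ed.
  by rewrite imset_f.
- have qQ' : q \in Q :\ q0 by apply/setD1P.
  have q'Q' : q' \in Q :\ q0 by apply/setD1P.
  by rewrite !gq // G2.
Qed.


Definition Setup U Y K Q (g : {ffun V -> V}) :=
  [/\ is_matching K, cover K = ~: U, is_matching Y & (forall e, e \in Y -> e \subset U)] /\
  [/\ is_matching Q, cover Q = U :\: cover Y & Gprop Q K g].

Lemma g_edge U Y K Q g : Setup U Y K Q g -> forall r, r \in U :\: cover Y ->
  exists2 q, q \in Q & r \in q.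
Proof. by case=> _ [_ hQ _] r; rewrite -hQ => /bigcupP [q qQ rq]; exists q. Qed.

Lemma g_out U Y K Q g : Setup U Y K Q g -> forall r, r \in U :\: cover Y -> g r \notin U.
Proof.
move=> S r rR; have [q qQ rq] := g_edge S rR.
case: S => [[_ hK _ _] [_ _ /GpropP [G1 _]]].
have : g r \in cover K by apply/bigcupP; exists (g @: q); [apply: G1|apply: imset_f].
by rewrite hK inE.
Qed.

Lemma g_inj U Y K Q g : Setup U Y K Q g -> {in U :\: cover Y &, injective g}.
Proof.
move=> S r1 r2 r1R r2R e12.
have [q1 q1Q r1q] := g_edge S r1R; have [q2 q2Q r2q] := g_edge S r2R.
case: S => [[/matP [K1 K2] _ _ _] [/matP [Q1 Q2] _ /GpropP [G1 G2]]].
case: (q1 =P q2) => [eq|/eqP nq].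
  subst q2.
  have : #|g @: q1| == #|q1| by rewrite K1 ?Q1 // G1.
  by move/imset_injP; apply.
have /disjointP := K2 _ _ (G1 _ q1Q) (G1 _ q2Q) (G2 _ _ q1Q q2Q nq).
by case/(_ (g r1)); [apply: imset_f|rewrite e12; apply: imset_f].
Qed.


Definition Dset Q (g : {ffun V -> V}) : {set {set V}} := [set g @: q | q : {set V} in Q].
Definition Mnew U Y K Q (g : {ffun V -> V}) : {set {set V}} :=
  Y :|: (K :\: Dset Q g) :|: [set [set r; g r] | r in U :\: cover Y].

Lemma MnewP U Y K Q g e : reflect
  [\/ e \in Y, e \in K /\ e \notin Dset Q g | exists2 r, r \in U :\: cover Y & e = [set r; g r]]
  (e \in Mnew U Y K Q g).
Proof.
rewrite /Mnew !inE -orbA; apply: (iffP or3P) => -[H|H|H]; try by [constructor 1|constructor 2|constructor 3].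
- by constructor 2; case/andP: H => ->.
- by constructor 3; case/imsetP: H => r rR ->; exists r.
- by constructor 2; case: H => -> ->.
- by constructor 3; case: H => r rR ->; apply: imset_f.
Qed.

Lemma inY_sub U Y K Q g : Setup U Y K Q g -> forall e, e \in Y ->
  e \subset U /\ e \subset cover Y.
Proof. by case=> [[_ _ _ HY] _] e eY; split; [apply: HY|apply: bigcup_sup]. Qed.

Lemma inK_sub U Y K Q g : Setup U Y K Q g -> forall e, e \in K -> e \subset ~: U.
Proof. by case=> [[_ hK _ _] _] e eK; rewrite -hK; apply: bigcup_sup. Qed.

Lemma inR U Y r : r \in U :\: cover Y -> r \in U /\ r \notin cover Y.
Proof. by rewrite inE => /andP []. Qed.

Lemma Mnew_disj U Y K Q g : Setup U Y K Q g -> forall e f v,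
  e \in Mnew U Y K Q g -> f \in Mnew U Y K Q g -> v \in e -> v \in f -> e = f.
Proof.
move=> S.
have HY := inY_sub S; have HK := inK_sub S; have go := g_out S; have gi := g_inj S.
have [[/matP [K1 K2] hK /matP [Y1 Y2] _] [_ hQ /GpropP [G1 G2]]] := S.
have cl : forall e f v, e \in Y -> f \in Mnew U Y K Q g -> v \in e -> v \in f -> e = f.
  move=> e f v eY /MnewP [fY|[fK _]|[r rR ->]] ve vf.
  - apply/eqP/negPn/negP => nef; have /disjointP := Y2 _ _ eY fY nef.
    by case/(_ v).
  - have [/subsetP eU _] := HY _ eY; have /subsetP fU := HK _ fK.
    by move: (fU _ vf); rewrite inE eU.
  - have [/subsetP eU /subsetP eC] := HY _ eY; have [rU rC] := inR rR.
    move: vf; rewrite !inE => /orP [] /eqP vr; subst v.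
      by move: rC; rewrite eC.
    by move: (go _ rR); rewrite eU.
have ck : forall e f v, e \in K -> e \notin Dset Q g -> f \in Mnew U Y K Q g ->
    f \notin Y -> v \in e -> v \in f -> e = f.
  move=> e f v eK eD /MnewP [fY|[fK _]|[r rR ->]] fnY ve vf.
  - by rewrite fY in fnY.
  - apply/eqP/negPn/negP => nef; have /disjointP := K2 _ _ eK fK nef.
    by case/(_ v).
  - have /subsetP eU := HK _ eK; have [rU rC] := inR rR.
    move: vf; rewrite !inE => /orP [] /eqP vr; subst v.
      by move: (eU _ ve); rewrite inE rU.
    have [q qQ rq] := g_edge S rR.
    have ne : e != g @: q by apply: contraNneq eD => ->; apply: imset_f.
    have /disjointP := K2 _ _ eK (G1 _ qQ) ne.
    by case/(_ (g r)) => //; apply: imset_f.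
move=> e f v eM fM ve vf.
case/MnewP: (eM) => [eY|[eK eD]|[r rR er]].
- exact: cl ve vf.
- case fY: (f \in Y); first by apply/esym; apply: cl vf ve.
  by apply: ck ve vf => //; rewrite fY.
case/MnewP: (fM) => [fY|[fK fD]|[r' r'R fr]].
- by apply/esym; apply: cl vf ve.
- apply/esym; apply: ck vf ve => //.
  rewrite er; apply/negP => /(inY_sub S) [/subsetP sU _].
  by move: (go _ rR); rewrite sU // !inE eqxx orbT.
have [rU _] := inR rR; have [r'U _] := inR r'R.
suff rr : r = r' by rewrite er fr rr.
move: ve vf; rewrite er fr !inE => /orP [] /eqP e1 /orP [] /eqP e2.
- by rewrite -e1 -e2.
- by move: (go _ r'R); rewrite -e2 e1 rU.
- by move: (go _ rR); rewrite -e1 e2 r'U.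
- by apply: gi => //; rewrite -e1 -e2.
Qed.


Lemma Mnew_pm U Y K Q g : Setup U Y K Q g -> perfect_matching (Mnew U Y K Q g).
Proof.
move=> S.
have HY := inY_sub S; have HK := inK_sub S; have go := g_out S.
have [[/matP [K1 K2] hK /matP [Y1 Y2] _] [_ hQ /GpropP [G1 G2]]] := S.
apply/andP; split.
  apply/matP; split.
    move=> e /MnewP [/Y1|[/K1]|[r rR ->]] //.
    rewrite cards2; have [rU _] := inR rR.
    by case: eqP => // er; move: (go _ rR); rewrite -er rU.
  move=> e f eM fM nef; apply/disjointP => v ve vf.
  by move: nef; rewrite (Mnew_disj S eM fM ve vf) eqxx.
apply/eqP/setP => v; rewrite inE; apply/bigcupP.
case vU: (v \in U).
  case vC: (v \in cover Y).
    case/bigcupP: vC => e eY ve; exists e => //; apply/MnewP; by constructor 1.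
  have vR : v \in U :\: cover Y by rewrite inE vU vC.
  exists [set v; g v]; last by rewrite !inE eqxx.
  by apply/MnewP; constructor 3; exists v.
have : v \in cover K by rewrite hK inE vU.
case/bigcupP => k kK vk.
case kD: (k \in Dset Q g).
  case/imsetP: kD => q qQ kq; move: vk; rewrite kq => /imsetP [r rq vr].
  have rR : r \in U :\: cover Y by rewrite -hQ; apply/bigcupP; exists q.
  exists [set r; g r]; last by rewrite vr !inE eqxx orbT.
  by apply/MnewP; constructor 3; exists r.
exists k => //; apply/MnewP; constructor 2; by rewrite kD.
Qed.

Lemma Mnew_Y U Y K Q g : Setup U Y K Q g -> [set e in Mnew U Y K Q g | e \subset U] = Y.
Proof.
move=> S; have HY := inY_sub S; have HK := inK_sub S; have go := g_out S.
have [[/matP [K1 K2] hK /matP [Y1 Y2] _] _] := S.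
apply/setP => e; rewrite inE; apply/andP/idP => [[/MnewP [eY|[eK _]|[r rR ->]] sU]|eY] //.
- have : #|e| = 2 by apply: K1.
  move/eqP/cards2P => [a [b [_ eab]]].
  have /subsetP := HK _ eK; move/(_ a); rewrite eab !inE eqxx => /(_ isT).
  by move/subsetP: sU => /(_ a); rewrite eab !inE eqxx => /(_ isT) ->.
- by move/subsetP: sU => /(_ (g r)); rewrite !inE eqxx orbT => /(_ isT); move: (go _ rR) => /negP.
- split; first by apply/MnewP; constructor 1.
  by case: (HY _ eY).
Qed.

Lemma Mnew_K U Y K Q g : Setup U Y K Q g ->
  [set e in Mnew U Y K Q g | [disjoint e & U]] = K :\: Dset Q g.
Proof.
move=> S; have HY := inY_sub S; have HK := inK_sub S.
have [[_ hK /matP [Y1 Y2] _] _] := S.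
apply/setP => e; rewrite inE; apply/andP/idP => [[/MnewP [eY|[eK eD]|[r rR ->]] dj]|].
- have : #|e| = 2 by apply: Y1.
  move/eqP/cards2P => [a [b [_ eab]]].
  have [/subsetP sU _] := HY _ eY.
  move/disjointP: dj => /(_ a); rewrite eab !inE eqxx => /(_ isT); case.
  by apply: sU; rewrite eab !inE eqxx.
- by rewrite inE eK eD.
- move/disjointP: dj => /(_ r); rewrite !inE eqxx => /(_ isT); case.
  by have [] := inR rR.
rewrite inE => /andP [eD eK]; split; first by apply/MnewP; constructor 2.
apply/disjointP => v ve vU; have /subsetP := HK _ eK.
by move/(_ v ve); rewrite inE vU.
Qed.

Lemma Mnew_g U Y K Q g : Setup U Y K Q g -> forall r w, r \in U :\: cover Y ->
  [set r; w] \in Mnew U Y K Q g -> w = g r.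
Proof.
move=> S r w rR wM.
have rM : [set r; g r] \in Mnew U Y K Q g by apply/MnewP; constructor 3; exists r.
have e := Mnew_disj S wM rM (setU11 _ _) (setU11 _ _).
have : w \in [set r; g r] by rewrite -e !inE eqxx orbT.
rewrite !inE => /orP [/eqP wr|/eqP //].
have /andP [/matP [M1 _] _] := Mnew_pm S.
by move: (M1 _ wM); rewrite wr setUid cards1.
Qed.


Lemma D_sub U Y K Q g : Setup U Y K Q g -> Dset Q g \subset K.
Proof.
case=> _ [_ _ /GpropP [G1 _]]; apply/subsetP => d /imsetP [q qQ ->]; exact: G1.
Qed.

Lemma Mnew_inj (Qf : {set V} -> {set {set V}}) U Y1 Y2 K1 K2 g1 g2 :
  Setup U Y1 K1 (Qf (U :\: cover Y1)) g1 -> Setup U Y2 K2 (Qf (U :\: cover Y2)) g2 ->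
  Mnew U Y1 K1 (Qf (U :\: cover Y1)) g1 = Mnew U Y2 K2 (Qf (U :\: cover Y2)) g2 ->
  Y1 = Y2 /\ K1 = K2.
Proof.
move=> S1 S2 eM.
have eY : Y1 = Y2 by rewrite -(Mnew_Y S1) -(Mnew_Y S2) eM.
split => //; subst Y2.
set Q := Qf _ in S1 S2 eM.
have eg : {in U :\: cover Y1, g1 =1 g2}.
  move=> r rR; apply: (Mnew_g S2 rR); rewrite -eM.
  by apply/MnewP; constructor 3; exists r.
have eD : Dset Q g1 = Dset Q g2.
  apply: eq_in_imset => q qQ; apply: eq_in_imset => v vq; apply: eg.
  case: S1 => _ [_ <- _]; by apply/bigcupP; exists q.
rewrite -(setID K1 (Dset Q g1)) -(setID K2 (Dset Q g2)).
rewrite (setIidPr (D_sub S1)) (setIidPr (D_sub S2)) -(Mnew_K S1) -(Mnew_K S2) eM eD.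
by rewrite setUC.
Qed.


Definition Qof R : {set {set V}} :=
  odflt set0 [pick Q : {set {set V}} | is_matching Q && (cover Q == R)].
Definition gof Q K : {ffun V -> V} := odflt [ffun v => v] [pick g : {ffun V -> V} | Gprop Q K g].
Definition Ycal U : {set {set {set V}}} := [set Y : {set {set V}} |
  [&& is_matching Y, [forall e in Y, e \subset U] & #|U :\: cover Y| <= #|~: U|]].
Definition Psi X (p : {set {set V}} * {set {set V}}) : {set {set V}} :=
  Mnew (cover X) p.2 (p.1 :\: X) (Qof (cover X :\: cover p.2))
       (gof (Qof (cover X :\: cover p.2)) (p.1 :\: X)).

Lemma YcalP U Y : reflect [/\ is_matching Y, (forall e, e \in Y -> e \subset U) &
   #|U :\: cover Y| <= #|~: U|] (Y \in Ycal U).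
Proof.
rewrite inE; apply: (iffP and3P) => [[H1 /forallP H2 H3]|[H1 H2 H3]]; split => //.
- by move=> e eY; have /implyP := H2 e; apply.
- by apply/forallP => e; apply/implyP; apply: H2.
Qed.

Lemma K_cover X M : perfect_matching M -> X \subset M ->
  is_matching (M :\: X) /\ cover (M :\: X) = ~: cover X.
Proof.
case/andP => /matP [M1 M2] /eqP cM XM; split.
  apply/matP; split => [e /setDP [eM _]|e f /setDP [eM _] /setDP [fM _]]; [exact: M1|exact: M2].
apply/setP => v; rewrite inE; apply/bigcupP/idP => [[e /setDP [eM eX] ve]|vX].
  apply/negP => /bigcupP [f fX vf].
  have nef : e != f by apply: contraNneq eX => ->.
  by have /disjointP := M2 _ _ eM (subsetP XM _ fX) nef; case/(_ v).
have : v \in cover M by rewrite cM.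
case/bigcupP => e eM ve; exists e => //; rewrite inE eM andbT.
apply: contraNN vX => eX; by apply/bigcupP; exists e.
Qed.

Lemma Setup_of X M Y : is_matching X -> perfect_matching M -> X \subset M ->
  Y \in Ycal (cover X) ->
  Setup (cover X) Y (M :\: X) (Qof (cover X :\: cover Y))
        (gof (Qof (cover X :\: cover Y)) (M :\: X)).
Proof.
move=> mX pM XM /YcalP [mY HY cY].
have [mK cK] := K_cover pM XM.
have sYU : cover Y \subset cover X.
  by apply/subsetP => v /bigcupP [e eY ve]; apply: (subsetP (HY _ eY)).
have cR : #|cover X :\: cover Y| = (#|X| - #|Y|).*2.
  by rewrite cardsD (setIidPr sYU) !card_cover_mat // doubleB.
have [Q0 [mQ0 cQ0]] := exists_pm cR.
have QP : is_matching (Qof (cover X :\: cover Y)) /\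
          cover (Qof (cover X :\: cover Y)) = cover X :\: cover Y.
  rewrite /Qof; case: pickP => [Q /andP [h1 /eqP h2] //|none].
  by move: (none Q0); rewrite mQ0 cQ0 eqxx.
case: QP => mQ cQ.
have le : #|Qof (cover X :\: cover Y)| <= #|M :\: X|.
  by rewrite -leq_double -!card_cover_mat // cQ cK.
have [g0 hg0] := exists_g mQ mK (erefl _) le.
have gP : Gprop (Qof (cover X :\: cover Y)) (M :\: X) (gof (Qof (cover X :\: cover Y)) (M :\: X)).
  rewrite /gof; case: pickP => [g //|none].
  by move: (none g0); rewrite hg0.
by split; split.
Qed.


Lemma Psi_inj X (A : {set {set {set V}}}) : is_matching X ->
  (forall M, M \in A -> perfect_matching M && (X \subset M)) ->
  {in setX A (Ycal (cover X)) &, injective (Psi X)}.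
Proof.
move=> mX HA [M1 Y1] [M2 Y2] /setXP [M1A Y1P] /setXP [M2A Y2P] eP.
have /andP [p1 s1] := HA _ M1A; have /andP [p2 s2] := HA _ M2A.
have [eY eK] := Mnew_inj (Setup_of mX p1 s1 Y1P) (Setup_of mX p2 s2 Y2P) eP.
congr pair => //.
by rewrite -(setID M1 X) -(setID M2 X) (setIidPr s1) (setIidPr s2) eK.
Qed.

Lemma Psi_sub X M Y P : is_matching X -> perfect_matching M -> X \subset M ->
  Y \in Ycal (cover X) -> [disjoint cover P & cover X] ->
  P \subset Psi X (M, Y) -> P \subset M.
Proof.
move=> mX pM XM YP dj PS; have S := Setup_of mX pM XM YP.
apply/subsetP => e eP.
have : e \in [set e in Psi X (M, Y) | [disjoint e & cover X]].
  rewrite inE (subsetP PS _ eP) /=.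
  by apply: disjointWl dj; apply: bigcup_sup.
rewrite /Psi /= (Mnew_K S) => /setDP [/setDP [] //].
Qed.

Lemma main_count X (A B : {set {set {set V}}}) : is_matching X ->
  (forall M, M \in A -> perfect_matching M && (X \subset M)) ->
  (forall M Y, M \in A -> Y \in Ycal (cover X) -> Psi X (M, Y) \in B) ->
  #|A| * #|Ycal (cover X)| <= #|B|.
Proof.
move=> mX HA HB.
rewrite -cardsX -(card_in_imset (Psi_inj mX HA)).
apply: subset_leq_card; apply/subsetP => _ /imsetP [[M Y] /setXP [MA YP] ->].
exact: HB.
Qed.

Lemma Psi_pm X M Y : is_matching X -> perfect_matching M -> X \subset M ->
  Y \in Ycal (cover X) -> perfect_matching (Psi X (M, Y)).
Proof. by move=> mX pM XM YP; apply: Mnew_pm; apply: Setup_of. Qed.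


Lemma sum_eq1 lo hi k : lo <= k < hi -> \sum_(lo <= j < hi) (k == j : nat) = 1.
Proof.
move=> hk.
rewrite (eq_bigr (fun j => if j == k then 1 else 0)); last by move=> j _; rewrite eq_sym; case: (j == k).
rewrite -big_mkcond /= sum1_count.
by rewrite (count_uniq_mem k (iota_uniq _ _)) mem_index_iota hk.
Qed.

Lemma Ycal_card_mat U Y : Y \in Ycal U ->
  #|U :\: cover Y| = #|U| - #|Y|.*2 /\ #|Y|.*2 <= #|U|.
Proof.
case/YcalP => mY HY _.
have sYU : cover Y \subset U.
  by apply/subsetP => v /bigcupP [e eY ve]; apply: (subsetP (HY _ eY)).
by rewrite cardsD (setIidPr sYU) -card_cover_mat // subset_leq_card.
Qed.

Lemma card_Ycal U x n : #|U| = x.*2 -> #|~: U| = (n - x).*2 -> x <= n ->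
  #|Ycal U| = \sum_(x.*2 - n <= j < x.+1) #|mat_in U j|.
Proof.
move=> cU cUc xn.
rewrite -sum1_card.
rewrite (eq_bigr (fun Y => \sum_(x.*2 - n <= j < x.+1) (#|Y| == j : nat))); last first.
  move=> Y YP; rewrite sum_eq1 //.
  have [h1 h2] := Ycal_card_mat YP.
  case/YcalP: YP => _ _; rewrite h1 cU cUc => le; rewrite cU in h2.
  move: h2 le; rewrite -!muln2 => /ssrnat.leP h2 /ssrnat.leP le; apply/andP; split; apply/ssrnat.leP;
  move/ssrnat.leP: xn => xn; rewrite -?minusE -?multE in h2 le *; lia.
rewrite exchange_big /=; apply: eq_big_nat => j /andP [lj ju].
rewrite sum_pred_card; suff -> : [set y in Ycal U | #|y| == j] = mat_in U j by [].
apply/setP => Y; rewrite inE.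
apply/andP/mat_inP => [[/YcalP [h1 h2 _] /eqP h3]|[h1 h2 h3]]; first by split.
split; last by apply/eqP.
apply/YcalP; split => //.
have mY : Y \in mat_in U j by apply/mat_inP.
have sYU : cover Y \subset U.
  by apply/subsetP => v /bigcupP [e eY ve]; apply: (subsetP (h2 _ eY)).
rewrite cardsD (setIidPr sYU) card_cover_mat // h3 cU cUc -!muln2.
move: lj ju; rewrite ltnS -?muln2 => /ssrnat.leP lj /ssrnat.leP ju; apply/ssrnat.leP; move/ssrnat.leP: xn => xn; rewrite -?minusE -?multE in lj ju *; lia.
Qed.

End Gen.

Lemma term_eq (V : finType) (U : {set V}) x j : #|U| = x.*2 ->
  (#|mat_in U j|%:R : rat) = ('C(x.*2, j.*2)%:R * ((j.*2)`!%:R / (j`! * 2 ^ j)%:R))%R.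
Proof.
move=> cU.
rewrite mulrA -natrM bin_ffact -cU -(count_mat U j) mulnC natrM mulfK //.
by rewrite pnatr_eq0 -lt0n muln_gt0 fact_gt0 expn_gt0.
Qed.

Unset Implicit Arguments.
Theorem mainTheorem5 (n x s : nat) (Ms : 'I_s -> {set {set 'I_(n.*2)}})
  (S : {set ('I_s * {set {set 'I_(n.*2)}})})
  (i : 'I_s) (X : {set {set 'I_(n.*2)}}) :
  (0 < n)%N -> (0 < x)%N -> (x <= n)%N ->
  (forall k, perfect_matching (Ms k)) ->
  X \subset Ms i -> x_matching x X ->
  (forall p, p \in S ->
     [/\ p.2 \subset Ms p.1, x_matching x p.2 & [disjoint cover p.2 & cover X]]) ->
  (0 < prob (ev_avoid S))%R ->
  (cond_prob (ev_contains X) (ev_avoid S) <= 1 / bigN n x)%R.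
Proof.
move=> _ _ xn _ _ /andP [mX /eqP cX] HS hP.
set U := cover X.
have cU : #|U| = x.*2 by rewrite card_cover_mat // cX.
have cUc : #|~: U| = (n - x).*2.
  have h := cardsC U; rewrite card_ord cU in h.
  move: h; move: #|~: U| => k hk.
  by rewrite doubleB -hk addKn.
set AE := [set M in pm_space n | ev_contains X M && ev_avoid S M].
set E := [set M in pm_space n | ev_avoid S M].
have HA : forall M, M \in AE -> perfect_matching M && (X \subset M).
  by move=> M; rewrite !inE /ev_contains => /andP [-> /andP [-> _]].
have HB : forall M Y, M \in AE -> Y \in Ycal U -> Psi X (M, Y) \in E.
  move=> M Y MA YP; have /andP [pM XM] := HA _ MA.
  rewrite inE; apply/andP; split; first by rewrite inE Psi_pm.
  apply/forallP => p; apply/implyP => pS; apply/negP => sub.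
  have [_ _ dj] := HS _ pS.
  have := Psi_sub mX pM XM YP dj sub.
  move: MA; rewrite !inE => /andP [_ /andP [_ /forallP /(_ p)]].
  by rewrite pS /= => /negP.
have key := main_count mX HA HB.
have YX : X \in Ycal U.
  apply/YcalP; split => //; first by move=> e eX; apply: bigcup_sup.
  by rewrite setDv cards0.
have ypos : 0 < #|Ycal U| by apply/card_gt0P; exists X.
have bN : bigN n x = (#|Ycal U|%:R)%R.
  rewrite (card_Ycal cU cUc xn) natr_sum /bigN; apply: eq_bigr => j _.
  by rewrite (term_eq j cU).
rewrite /cond_prob /prob -/AE -/E bN.
move: hP; rewrite /prob -/E => hP.
have pp : ((0 : rat) < #|pm_space n|%:R)%R.
  rewrite ltr0n lt0n; apply/eqP => h; move: hP; by rewrite h invr0 mulr0 ltxx.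
have ep : ((0 : rat) < #|E|%:R)%R by move: hP; rewrite pmulr_lgt0 // invr_gt0.
rewrite mulrC invf_div mulrA mulrC !mulrA mulVf ?mul1r; last by rewrite gt_eqF.
rewrite mulrC ler_pdivrMr // mulrC ler_pdivlMr ?ltr0n // -natrM ler_nat.
done.
Qed.
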